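(* Let $(M_1,f_1,g_1)$ and $(M_2,f_2,g_2)$ be $(m,n)$-hypermodules over a commutative Krasner $(m,n)$-hyperring $(R,f',g')$ with scalar identity $1$, let $Q_1$ and $Q_2$ be $n$-ary weakly classical prime subhypermodules of $M_1$ and $M_2$ respectively, and let $h:M_1\to M_2$ be a homomorphism. Then: (1) if $h$ is an epimorphism and $\mathrm{Ker}(h)\subseteq Q_1$, then $h(Q_1)$ is an $n$-ary weakly classical prime subhypermodule of $M_2$; (2) if $h$ is a monomorphism with $h^{-1}(Q_2)\neq M_1$, then $h^{-1}(Q_2)$ is an $n$-ary weakly classical prime subhypermodule of $M_1$.
   Context: A commutative Krasner $(m,n)$-hyperring with scalar identity $1$ is a triple $(R,f',g')$ where $(R,f')$ is a canonical $m$-ary hypergroup with zero $0$, $(R,g')$ is a commutative $n$-ary semigroup, $g'$ is distributive over $f'$, $0$ is a zero element for $g'$, and $g'(x,1^{(n-1)})=x$. Notation: $x_i^j$ denotes $x_i,\dots,x_j$ and $x^{(k)}$ denotes $x$ repeated $k$ times. An $(m,n)$-hypermodule over $R$ is a triple $(M,f,g)$ with $(M,f)$ a canonical $m$-ary hypergroup with zero $0$ and $g:R^{n-1}\times M\to P^*(M)$ satisfying: $g(r_1^{n-1},f(x_1^m))=f(g(r_1^{n-1},x_1),\dots,g(r_1^{n-1},x_m))$; $g(r_1^{i-1},f'(s_1^m),r_{i+1}^{n-1},x)=f(g(r_1^{i-1},s_1,r_{i+1}^{n-1},x),\dots,g(r_1^{i-1},s_m,r_{i+1}^{n-1},x))$;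 $g(r_1^{i-1},g'(r_i^{i+n-1}),r_{i+n}^{2n-2},x)=g(r_1^{n-1},g(r_n^{2n-2},x))$; $g(r_1^{i-1},0,r_{i+1}^{n-1},x)=\{0\}$; moreover $g(1^{(n-1)},a)=\{a\}$. A subhypermodule is a nonempty subset $N$ with $(N,f)$ an $m$-ary subhypergroup and $g(R^{(n-1)},N)\subseteq N$. A proper subhypermodule $Q$ of $M$ is $n$-ary weakly classical prime if for $r_1^{n-1}\in R$, $a\in M$, $0\notin g(r_1^{n-1},a)\subseteq Q$ implies $g(r_i,1^{(n-2)},a)\subseteq Q$ for some $1\le i\le n-1$. A homomorphism $h:M_1\to M_2$ is a map with $h(f_1(a_1^m))=f_2(h(a_1),\dots,h(a_m))$ and $h(g_1(r_1^{n-1},a))=g_2(r_1^{n-1},h(a))$ for all $a_1^m,a\in M_1$, $r_1^{n-1}\in R$; $\mathrm{Ker}(h)=\{a\in M_1:h(a)=0\}$; epimorphism means surjective, monomorphism injective. *)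

(* Defs.v *)
(* Lists x_1^{2k-1} are encoded by
   functions nat -> T (0-indexed). *)
From mathcomp Require Import all_boot all_fingroup.
Set Implicit Arguments. Unset Strict Implicit. Unset Printing Implicit Defensive.

Definition hset (T : Type) := T -> Prop.
Definition single {T : Type} (x : T) : hset T := fun y => y = x.
Definition set_eq {T : Type} (A B : hset T) : Prop := forall z, A z <-> B z.

Definition ext {T : Type} {k : nat} (F : ('I_k -> T) -> hset T)
  (A : 'I_k -> hset T) : hset T :=
  fun z => exists y : 'I_k -> T, (forall j, A j (y j)) /\ F y z.

Definition upd {T : Type} {k : nat} (x : 'I_k -> T) (i : 'I_k) (v : T) : 'I_k -> T :=
  fun j => if j == i then v else x j.

Definition win {T : Type} {k : nat} (x : nat -> T) (s : nat) : 'I_k -> T :=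
  fun j => x (s + j).

Definition canonical_hypergroup (m : nat) (T : Type)
  (f : ('I_m -> T) -> hset T) (e : T) : Prop :=
  (forall x, exists z, f x z) /\
  (* associativity: f(x_1^{i-1}, f(x_i^{i+m-1}), x_{i+m}^{2m-1}) = f(x_1^{m-1}, f(x_m^{2m-1})) *)
  (forall (x : nat -> T) (i : 'I_m),
     set_eq
       (ext f (fun j : 'I_m => if j < i then single (x j)
                               else if j == i then f (win x i)
                               else single (x (j + m - 1))))
       (ext f (fun j : 'I_m => if j < m - 1 then single (x j)
                               else f (win x (m - 1))))) /\
  (forall (a : 'I_m -> T) (i : 'I_m) (z : T), exists y, f (upd a i y) z) /\
  (forall (s : {perm 'I_m}) (x : 'I_m -> T), set_eq (f (fun j => x (s j))) (f x)) /\
  (forall x, set_eq (f (fun j : 'I_m => if val j == 0 then x else e)) (single x)) /\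
  (forall e' : T,
     (forall x, set_eq (f (fun j : 'I_m => if val j == 0 then x else e')) (single x)) ->
     e' = e) /\
  (exists inv : T -> T,
     (forall x, f (fun j : 'I_m => if val j == 0 then x
                                  else if val j == 1 then inv x else e) e) /\
     (forall x y, f (fun j : 'I_m => if val j == 0 then x
                                    else if val j == 1 then y else e) e -> y = inv x) /\
     (* x in f(x_1^m) implies
        x_i in f(-x_{i-1},...,-x_1, x, -x_m,...,-x_{i+1})  (0-indexed below) *)
     (forall (x : T) (xs : 'I_m -> T), f xs x ->
        forall i : 'I_m,
          f (fun p : 'I_m =>
               if p < i then inv (xs (insubd i (i - 1 - p)))
               else if p == i then x
               else inv (xs (insubd i (m + i - p)))) (xs i))).

Definition krasner_hyperring (m n : nat) (R : Type)
  (f' : ('I_m -> R) -> hset R) (g' : ('I_n -> R) -> R) (zero one : R) : Prop :=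
  canonical_hypergroup f' zero /\
  (forall (x : nat -> R) (i : 'I_n),
     g' (fun j : 'I_n => if j < i then x j
                         else if j == i then g' (win x i)
                         else x (j + n - 1))
     = g' (fun j : 'I_n => if j < n - 1 then x j else g' (win x (n - 1)))) /\
  (forall (s : {perm 'I_n}) (x : 'I_n -> R), g' (fun j => x (s j)) = g' x) /\
  (forall (x : 'I_n -> R) (i : 'I_n) (y : 'I_m -> R),
     set_eq (fun z => exists t, f' y t /\ z = g' (upd x i t))
            (f' (fun j => g' (upd x i (y j))))) /\
  (forall (x : 'I_n -> R) (i : 'I_n), g' (upd x i zero) = zero) /\
  (forall x : R, g' (fun j : 'I_n => if val j == 0 then x else one) = x).

Definition hypermodule (m n : nat) (R : Type)
  (f' : ('I_m -> R) -> hset R) (g' : ('I_n -> R) -> R) (zeroR one : R)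
  (M : Type) (f : ('I_m -> M) -> hset M) (g : ('I_n.-1 -> R) -> M -> hset M)
  (zeroM : M) : Prop :=
  canonical_hypergroup f zeroM /\
  (forall r x, exists z, g r x z) /\
  (forall (r : 'I_n.-1 -> R) (x : 'I_m -> M),
     set_eq (fun z => exists t, f x t /\ g r t z) (ext f (fun j => g r (x j)))) /\
  (forall (r : 'I_n.-1 -> R) (i : 'I_n.-1) (s : 'I_m -> R) (x : M),
     set_eq (fun z => exists t, f' s t /\ g (upd r i t) x z)
            (ext f (fun j => g (upd r i (s j)) x))) /\
  (* g(r_1^{i-1}, g'(r_i^{i+n-1}), r_{i+n}^{2n-2}, x) = g(r_1^{n-1}, g(r_n^{2n-2}, x)) *)
  (forall (r : nat -> R) (i : 'I_n.-1) (x : M),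
     set_eq (g (fun j : 'I_n.-1 => if j < i then r j
                                  else if j == i then g' (win r i)
                                  else r (j + n - 1)) x)
            (fun z => exists y, g (win r (n - 1)) x y /\ g (win r 0) y z)) /\
  (forall (r : 'I_n.-1 -> R) (i : 'I_n.-1) (x : M),
     set_eq (g (upd r i zeroR) x) (single zeroM)) /\
  (forall a : M, set_eq (g (fun _ => one) a) (single a)).

Definition subhypermodule (m n : nat) (R : Type) (M : Type)
  (f : ('I_m -> M) -> hset M) (g : ('I_n.-1 -> R) -> M -> hset M)
  (N : hset M) : Prop :=
  (exists x, N x) /\
  (forall (x : 'I_m -> M), (forall j, N (x j)) -> forall z, f x z -> N z) /\
  (forall (a : 'I_m -> M) (i : 'I_m) (z : M), (forall j, N (a j)) -> N z ->
     exists y, N y /\ f (upd a i y) z) /\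
  (forall (r : 'I_n.-1 -> R) (x : M), N x -> forall z, g r x z -> N z).

Definition weakly_classical_prime (m n : nat) (R : Type) (one : R) (M : Type)
  (f : ('I_m -> M) -> hset M) (g : ('I_n.-1 -> R) -> M -> hset M)
  (zeroM : M) (Q : hset M) : Prop :=
  subhypermodule f g Q /\
  (exists x, ~ Q x) /\
  (forall (r : 'I_n.-1 -> R) (a : M),
     ~ g r a zeroM -> (forall z, g r a z -> Q z) ->
     exists i : 'I_n.-1,
       forall z, g (fun j : 'I_n.-1 => if val j == 0 then r i else one) a z -> Q z).

Definition himage {A B : Type} (h : A -> B) (S : hset A) : hset B :=
  fun y => exists x, S x /\ h x = y.

Definition hyper_hom (m n : nat) (R : Type) (M1 M2 : Type)
  (f1 : ('I_m -> M1) -> hset M1) (g1 : ('I_n.-1 -> R) -> M1 -> hset M1)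
  (f2 : ('I_m -> M2) -> hset M2) (g2 : ('I_n.-1 -> R) -> M2 -> hset M2)
  (h : M1 -> M2) : Prop :=
  (forall a : 'I_m -> M1, set_eq (himage h (f1 a)) (f2 (fun j => h (a j)))) /\
  (forall (r : 'I_n.-1 -> R) (a : M1), set_eq (himage h (g1 r a)) (g2 r (h a))).

(* Main.v *)
Require Import Defs.
From mathcomp Require Import all_boot all_fingroup.
From mathcomp Require Import zify.
From Stdlib Require Import FunctionalExtensionality ClassicalEpsilon Classical.

Section HG.
Variables (m : nat) (T : Type) (f : ('I_m -> T) -> hset T) (e : T) (inv : T -> T).
Hypothesis Hm : 2 <= m.
Hypothesis Hinv2 : forall x y, f (fun j : 'I_m => if val j == 0 then x
                                    else if val j == 1 then y else e) e -> y = inv x.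
Hypothesis Hrev : forall (x : T) (xs : 'I_m -> T), f xs x ->
        forall i : 'I_m,
          f (fun p : 'I_m =>
               if p < i then inv (xs (insubd i (i - 1 - p)))
               else if p == i then x
               else inv (xs (insubd i (m + i - p)))) (xs i).
Variable N : hset T.
Hypothesis Ncl : forall (x : 'I_m -> T), (forall j, N (x j)) -> forall z, f x z -> N z.
Hypothesis Nrep : forall (a : 'I_m -> T) (i : 'I_m) (z : T), (forall j, N (a j)) -> N z ->
     exists y, N y /\ f (upd a i y) z.
Hypothesis Ne : N e.

Lemma inv_in x : N x -> N (inv x).
Proof.
move=> Nx.
have i1 : 1 < m by [].
have Na : forall j : 'I_m, N (if val j == 0 then x else e) by move=> j; case: ifP.
have [y [Ny Hy]] := Nrep _ (Ordinal i1) e Na Ne.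
have -> : inv x = y; last by [].
symmetry; apply: Hinv2.
have <- : upd (fun j : 'I_m => if val j == 0 then x else e) (Ordinal i1) y =
  (fun j : 'I_m => if val j == 0 then x else if val j == 1 then y else e); last by [].
apply: functional_extensionality => j; rewrite /upd -val_eqE /=.
by case: j => [[|[|k]] Hk].
Qed.

Lemma missing (w : 'I_m -> T) z i : f w z -> (forall k, k != i -> N (w k)) -> N z -> N (w i).
Proof.
move=> Hw Nk Nz.
apply: (Ncl _ _ _ (Hrev _ _ Hw i)) => p.
have Hi := ltn_ord i; have Hp := ltn_ord p.
case: ifP => Hpi.
  apply: inv_in; apply: Nk; rewrite -val_eqE val_insubd.
  rewrite (_ : (i - 1 - p < m) = true); last by lia.
  have -> : val i = nat_of_ord i by []. lia.
case: ifP => // Hpi2.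
apply: inv_in; apply: Nk; rewrite -val_eqE val_insubd.
move/negbT: Hpi2; rewrite -val_eqE => Hpi2.
have Hne : nat_of_ord p != nat_of_ord i by exact: Hpi2.
move/negbT: Hpi; rewrite -leqNgt => Hpi.
rewrite (_ : (m + i - p < m) = true); last by lia.
have -> : val i = nat_of_ord i by [].
lia.
Qed.
End HG.

Lemma hpat (A B : Type) (m : nat) (h : A -> B) (a b c : A) :
  (fun j : 'I_m => h (if val j == 0 then a else if val j == 1 then b else c)) =
  (fun j : 'I_m => if val j == 0 then h a else if val j == 1 then h b else h c).
Proof. apply: functional_extensionality => j; by case: (val j == 0); case: (val j == 1). Qed.

Lemma hupd (A B : Type) (m : nat) (h : A -> B) (a : 'I_m -> A) i y :
  (fun j => h (upd a i y j)) = upd (fun j => h (a j)) i (h y).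
Proof. apply: functional_extensionality => j; rewrite /upd; by case: ifP. Qed.

Theorem mainTheorem6 (m n : nat) (Hm : 2 <= m) (Hn : 2 <= n)
  (R : Type) (f' : ('I_m -> R) -> hset R) (g' : ('I_n -> R) -> R) (zeroR one : R)
  (HR : krasner_hyperring f' g' zeroR one)
  (M1 : Type) (f1 : ('I_m -> M1) -> hset M1) (g1 : ('I_n.-1 -> R) -> M1 -> hset M1)
  (z1 : M1) (HM1 : hypermodule f' g' zeroR one f1 g1 z1)
  (M2 : Type) (f2 : ('I_m -> M2) -> hset M2) (g2 : ('I_n.-1 -> R) -> M2 -> hset M2)
  (z2 : M2) (HM2 : hypermodule f' g' zeroR one f2 g2 z2)
  (Q1 : hset M1) (Q2 : hset M2)
  (HQ1 : weakly_classical_prime one f1 g1 z1 Q1)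
  (HQ2 : weakly_classical_prime one f2 g2 z2 Q2)
  (h : M1 -> M2) (Hh : hyper_hom f1 g1 f2 g2 h) :
  ((forall y : M2, exists x : M1, h x = y) ->
   (forall a : M1, h a = z2 -> Q1 a) ->
   weakly_classical_prime one f2 g2 z2 (himage h Q1)) /\
  (injective h ->
   ~ (forall x : M1, Q2 (h x)) ->
   weakly_classical_prime one f1 g1 z1 (fun x => Q2 (h x))).
Proof.
case: HM1 => CH1 [Gex1 [_ [_ [_ [G01 G11]]]]].
case: HM2 => CH2 [Gex2 [_ [_ [_ [G02 G12]]]]].
case: CH1 => _ [_ [Rep1 [_ [_ [_ [inv1 [I1a [I1b I1c]]]]]]]].
case: CH2 => _ [_ [Rep2 [_ [_ [_ [inv2 [I2a [I2b I2c]]]]]]]].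
case: HQ1 => [[Q1ne [Q1cl [Q1rep Q1g]]] [Q1out Q1pr]].
case: HQ2 => [[Q2ne [Q2cl [Q2rep Q2g]]] [Q2out Q2pr]].
case: Hh => Hf Hg.
have Hn1 : 0 < n.-1 by lia.
pose i0 := Ordinal Hn1.
pose r0 := upd (fun _ : 'I_n.-1 => zeroR) i0 zeroR.
have G1z x : g1 r0 x z1 by apply: (G01 _ _ x z1).2.
have G2z x : g2 r0 x z2 by apply: (G02 _ _ x z2).2.
have Q1z : Q1 z1 by case: Q1ne => x Hx; exact: (Q1g r0 x Hx z1 (G1z x)).
have Q2z : Q2 z2 by case: Q2ne => x Hx; exact: (Q2g r0 x Hx z2 (G2z x)).
have hz : h z1 = z2.
  have [x [Hx1 Hx2]] := (Hg r0 z1 z2).2 (G2z (h z1)).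
  by have := (G01 _ _ z1 x).1 Hx1 => E; rewrite /single in E; rewrite -E.
have hinv x : h (inv1 x) = inv2 (h x).
  apply: I2b; rewrite -hz -hpat; apply: (Hf _ _).1; exists z1; split => //; exact: I1a.
split.
- move=> Hsurj Hker.
  have Hback x : himage h Q1 (h x) -> Q1 x.
    case=> q [Qq Eq].
    pose pat := fun j : 'I_m => if val j == 0 then x else if val j == 1 then inv1 q else z1.
    have : f2 (fun j => h (pat j)) z2.
      rewrite /pat hpat hinv -Eq hz; exact: I2a.
    move/(Hf _ _).2 => [t [Ht1 Ht2]].
    have Qt := Hker _ Ht2.
    have := missing _ _ _ _ _ Hm I1b I1c _ Q1cl Q1rep Q1z _ _ (Ordinal (ltn_trans (isT : 0 < 1) Hm)) Ht1 _ Qt.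
    rewrite /pat /=; apply => k; rewrite -val_eqE /= => /negbTE ->.
    by case: ifP => _ //; apply: (inv_in _ _ _ _ _ Hm I1b _ Q1rep Q1z).
  split; [split; [|split; [|split]] | split].
  + by case: Q1ne => x Hx; exists (h x), x.
  + move=> x Nx z Hz.
    have [x' Hx'] : exists x' : 'I_m -> M1, forall j, Q1 (x' j) /\ h (x' j) = x j.
      exists (fun j => proj1_sig (constructive_indefinite_description _ (Nx j))).
      by move=> j; case: (constructive_indefinite_description _ (Nx j)).
    have : f2 (fun j => h (x' j)) z.
      have -> : (fun j => h (x' j)) = x by apply: functional_extensionality => j; case: (Hx' j).
      exact: Hz.
    move/(Hf _ _).2 => [z' [Hz1 Hz2]]; exists z'; split => //.
    by apply: (Q1cl x') => // j; case: (Hx' j).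
  + move=> a i z Na [z' [Qz' Ez']].
    have [a' Ha'] : exists a' : 'I_m -> M1, forall j, Q1 (a' j) /\ h (a' j) = a j.
      exists (fun j => proj1_sig (constructive_indefinite_description _ (Na j))).
      by move=> j; case: (constructive_indefinite_description _ (Na j)).
    have [y [Qy Hy]] := Q1rep a' i z' (fun j => proj1 (Ha' j)) Qz'.
    exists (h y); split; first by exists y.
    have : himage h (f1 (upd a' i y)) z by exists z'.
    move/(Hf _ _).1; rewrite hupd.
    have -> : (fun j => h (a' j)) = a by apply: functional_extensionality => j; case: (Ha' j).
    by [].
  + move=> r x [x' [Qx' <-]] z Hz.
    have [z' [Hz1 Hz2]] := (Hg r x' z).2 Hz.
    by exists z'; split => //; apply: (Q1g r x').
  + case: Q1out => x Hx; exists (h x) => /Hback; exact: Hx.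
  + move=> r a Hna Hall.
    have [a' Ea'] := Hsurj a; subst a.
    have Hna' : ~ g1 r a' z1.
      by move=> H; apply: Hna; rewrite -hz; apply: (Hg _ _ _).1; exists z1.
    have Hall' : forall z, g1 r a' z -> Q1 z.
      move=> z Hz; apply: Hback; apply: Hall; apply: (Hg _ _ _).1; by exists z.
    have [i Hi] := Q1pr r a' Hna' Hall'.
    exists i => z /(Hg _ _ _).2 [z' [Hz1 Hz2]].
    by exists z'; split => //; apply: Hi.
- move=> Hinj Hnot.
  split; [split; [|split; [|split]] | split].
  + by exists z1; rewrite hz.
  + move=> x Nx z Hz.
    apply: (Q2cl (fun j => h (x j))) => //.
    by apply: (Hf _ _).1; exists z.
  + move=> a i z Na Nz.
    have [y Hy] := Rep1 a i z.
    exists y; split => //.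
    have : f2 (fun j => h (upd a i y j)) (h z) by apply: (Hf _ _).1; exists z.
    move=> H.
    have := missing _ _ _ _ _ Hm I2b I2c _ Q2cl Q2rep Q2z _ _ i H _ Nz.
    rewrite /upd eqxx; apply => k /negbTE ->; exact: Na.
  + move=> r x Nx z Hz.
    apply: (Q2g r (h x)) => //.
    by apply: (Hg _ _ _).1; exists z.
  + by apply: NNPP => H; apply: Hnot => x; apply: NNPP => Hx; apply: H; exists x.
  + move=> r a Hna Hall.
    have Hna' : ~ g2 r (h a) z2.
      move/(Hg _ _ _).2 => [x [Hx1 Hx2]]; apply: Hna.
      by rewrite -hz in Hx2; rewrite -(Hinj _ _ Hx2).
    have Hall' : forall z, g2 r (h a) z -> Q2 z.
      by move=> z /(Hg _ _ _).2 [x [Hx1 <-]]; apply: Hall.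
    have [i Hi] := Q2pr r (h a) Hna' Hall'.
    exists i => z Hz; apply: Hi; apply: (Hg _ _ _).1; by exists z.
Qed.
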